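(* Let $A\succeq0$ be an $m\times m$ diagonal matrix and $M\succ0$ an $m\times m$ matrix, and let $M_{diag}$ denote the diagonal matrix with the same diagonal as $M$. Then $[(M_{diag})^{-1}+A]^{-1}\succeq\big([M^{-1}+A]^{-1}\big)_{diag}$.
   Context: For a square matrix $E$, $(E)_{diag}$ is the diagonal matrix whose diagonal entries equal those of $E$. $P\succeq Q$ means $P-Q$ is positive semidefinite; $M\succ0$ means positive definite. *)

(* Defs.v *)
From mathcomp Require Import all_boot all_order all_algebra.
Set Implicit Arguments. Unset Strict Implicit. Unset Printing Implicit Defensive.
Import Order.TTheory GRing.Theory Num.Theory.
Local Open Scope ring_scope.

Definition psdmx (R : realFieldType) (m : nat) (P : 'M[R]_m) : Prop :=
  P^T = P /\ forall x : 'cV[R]_m, 0 <= (x^T *m P *m x) 0 0.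

Definition pdmx (R : realFieldType) (m : nat) (P : 'M[R]_m) : Prop :=
  P^T = P /\ forall x : 'cV[R]_m, x != 0 -> 0 < (x^T *m P *m x) 0 0.

Definition loewner_ge (R : realFieldType) (m : nat) (P Q : 'M[R]_m) : Prop :=
  psdmx (P - Q).

Definition diagpart (R : realFieldType) (m : nat) (E : 'M[R]_m) : 'M[R]_m :=
  diag_mx (\row_i E i i).

(* Main.v *)
Require Import Defs.
From mathcomp Require Import all_boot all_order all_algebra.
From mathcomp Require Import ring lra.
Import Order.TTheory GRing.Theory Num.Theory.
Local Open Scope ring_scope.

Section Aux.
Set Implicit Arguments.
Variables (R : realFieldType) (m : nat).
Implicit Types (P Q : 'M[R]_m) (u v : 'cV[R]_m).

Definition bil P u v := (u^T *m P *m v) 0 0.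

Lemma bilDl P u1 u2 v : bil P (u1 + u2) v = bil P u1 v + bil P u2 v.
Proof. by rewrite /bil linearD /= !mulmxDl mxE. Qed.
Lemma bilDr P u v1 v2 : bil P u (v1 + v2) = bil P u v1 + bil P u v2.
Proof. by rewrite /bil !mulmxDr mxE. Qed.
Lemma bilZl P a u v : bil P (a *: u) v = a * bil P u v.
Proof. by rewrite /bil linearZ /= -!scalemxAl mxE. Qed.
Lemma bilZr P a u v : bil P u (a *: v) = a * bil P u v.
Proof. by rewrite /bil -scalemxAr mxE. Qed.
Lemma bilDm P Q u v : bil (P + Q) u v = bil P u v + bil Q u v.
Proof. by rewrite /bil mulmxDr mulmxDl mxE. Qed.
Lemma bil_sym P u v : P^T = P -> bil P u v = bil P v u.
Proof.
move=> sP; rewrite /bil -[in LHS](trmxK (u^T *m P *m v)) [in LHS]mxE.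
by rewrite !trmx_mul trmxK sP mulmxA.
Qed.

Lemma bil_diag (d : 'rV[R]_m) u : bil (diag_mx d) u u = \sum_k d 0 k * u k 0 ^+ 2.
Proof.
rewrite /bil mul_mx_diag mxE; apply: eq_bigr => k _.
by rewrite !mxE; ring.
Qed.

Lemma bil_ee P i : bil P (delta_mx i 0) (delta_mx i 0) = P i i.
Proof. by rewrite /bil trmx_delta -rowE -colE !mxE. Qed.

Lemma bil_el P i v : bil P (delta_mx i 0) v = (P *m v) i 0.
Proof. by rewrite /bil trmx_delta -mulmxA -rowE !mxE. Qed.

Lemma CS P u v : psdmx P -> 0 < bil P u u ->
  bil P u v ^+ 2 <= bil P u u * bil P v v.
Proof.
move=> [sP pP] a0.
have := pP (bil P u v *: u - bil P u u *: v).
rewrite -/(bil _ _ _) bilDl !bilDr -!scaleNr !bilZl !bilZr (bil_sym v u sP).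
move=> h; nra.
Qed.

Lemma pd_unit P : pdmx P -> P \in unitmx.
Proof.
move=> [sP pP]; rewrite -row_free_unit -kermx_eq0; apply/negPn/negP => nz.
have [i /eqP ri] : exists i, row i (kermx P) != 0.
  apply/existsP; apply: contraR nz => /existsPn h.
  by apply/eqP/row_matrixP => i; rewrite row0; apply/eqP/negPn/h.
have hr : row i (kermx P) *m P = 0 by rewrite -row_mul mulmx_ker row0.
have := pP (row i (kermx P))^T.
rewrite trmx_eq0 trmxK hr mul0mx mxE ltxx => /(_ (introN eqP ri)).
done.
Qed.

Lemma pd_psd P : pdmx P -> psdmx P.
Proof.
move=> [sP pP]; split=> // x; case: (eqVneq x 0) => [->|nz].
  by rewrite mulmx0 mxE.
exact/ltW/pP.
Qed.

Lemma delta_neq0 (i : 'I_m) : delta_mx i 0 != 0 :> 'cV[R]_m.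
Proof.
apply/eqP => /matrixP /(_ i 0); rewrite !mxE !eqxx /= => /eqP.
by rewrite oner_eq0.
Qed.

Lemma inv_diag (d : 'rV[R]_m) : (forall k, d 0 k != 0) ->
  invmx (diag_mx d) = diag_mx (\row_k (d 0 k)^-1).
Proof.
move=> nz.
have h : diag_mx d *m diag_mx (\row_k (d 0 k)^-1) = 1%:M.
  rewrite mulmx_diag; apply/matrixP => i j; rewrite !mxE.
  by case: (eqVneq i j) => [->|_]; rewrite ?mulfV ?mulr0n ?mulr1n.
have [u _] := mulmx1_unit h.
by rewrite -[RHS](mulKmx u) h mulmx1.
Qed.

Lemma bil_inv P y : P^T = P -> P \in unitmx ->
  bil (invmx P) (P *m y) (P *m y) = bil P y y.
Proof.
move=> sP u; rewrite /bil trmx_mul sP.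
by rewrite mulmxK // mulmxA.
Qed.

End Aux.
Arguments bil {R m}.

Theorem lemma3 (R : realFieldType) (m : nat) (A M : 'M[R]_m) :
  is_diag_mx A -> psdmx A -> pdmx M ->
  loewner_ge (invmx (invmx (diagpart M) + A)) (diagpart (invmx (invmx M + A))).
Proof.
move=> dA [sA pA] pdM; have [sM pM] := pdM.
have Mu := pd_unit pdM.
set Mi := invmx M.
have sMi : Mi^T = Mi by rewrite /Mi trmx_inv sM.
have Mpos k : 0 < M k k by rewrite -bil_ee; apply/pM/delta_neq0.
have Apos k : 0 <= A k k by rewrite -bil_ee; apply/pA.
have Ad : A = diag_mx (\row_k A k k).
  apply/matrixP => i j; rewrite !mxE.
  case: (eqVneq i j) => [->|ne]; rewrite ?mulr1n // mulr0n.
  by apply: (is_diag_mxP dA); apply: contra ne => /eqP/val_inj ->.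
set N := Mi + A.
have sN : N^T = N by rewrite /N linearD /= sMi sA.
have pdN : pdmx N.
  split=> // x nx; change (0 < bil (Mi + A) x x); rewrite bilDm.
  have hA : 0 <= bil A x x by apply: pA.
  suff : 0 < bil Mi x x by move=> h; apply: ltr_wpDr.
  have -> : x = M *m (Mi *m x) by rewrite mulKVmx.
  rewrite bil_inv //; apply: pM; apply: contra nx => /eqP h0.
  by rewrite -(mulKVmx Mu x) -/Mi h0 mulmx0.
have Nu := pd_unit pdN.
set P := invmx N.
have sP : P^T = P by rewrite /P trmx_inv sN.
have key k : P k k <= ((M k k)^-1 + A k k)^-1.
  set e := delta_mx k 0 : 'cV[R]_m.
  set z := P *m e.
  set p := P k k.
  have hp : bil N z z = p.
    rewrite /bil trmx_mul sP -[e^T *m P *m N]mulmxA mulVmx // mulmx1 /z mulmxA.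
    by change (bil P e e = p); rewrite bil_ee.
  have zk : z k 0 = p by rewrite /z /e -colE mxE.
  have zn0 : z != 0.
    apply/eqP => z0; have := delta_neq0 R k.
    by rewrite -/e -(mulKVmx Nu e) -/P -/z z0 mulmx0 eqxx.
  have ppos : 0 < p by rewrite -hp; apply: (proj2 pdN).
  have hsplit : p = bil Mi z z + bil A z z by rewrite -hp /N bilDm.
  have ht : A k k * p ^+ 2 <= bil A z z.
    rewrite [in bil A _ _]Ad bil_diag (bigD1 k) //= mxE zk.
    rewrite lerDl; apply: sumr_ge0 => j _; rewrite mxE.
    by apply: mulr_ge0 => //; apply: sqr_ge0.
  have hs : p ^+ 2 <= M k k * bil Mi z z.
    set y := Mi *m z.
    have zy : z = M *m y by rewrite /y mulKVmx.
    rewrite zy bil_inv // -[in p ^+ 2]zk zy -bil_el -bil_ee.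
    apply: CS; first exact: pd_psd.
    by rewrite bil_ee.
  have Mk := Mpos k; have ak := Apos k.
  have h1 : 0 <= p * (M k k - p - A k k * M k k * p) by nra.
  have h2 : 0 <= M k k - p - A k k * M k k * p.
    by rewrite -(pmulr_rge0 _ ppos).
  have w0 : 0 < (M k k)^-1 by rewrite invr_gt0.
  have hw : M k k * (M k k)^-1 = 1 by rewrite mulfV // gt_eqF.
  have c0 : 0 < (M k k)^-1 + A k k by apply: ltr_wpDr.
  rewrite -[_^-1]mul1r ler_pdivlMr //.
  have h3 : 0 <= (M k k)^-1 * (M k k - p - A k k * M k k * p) by apply: mulr_ge0 => //; apply: ltW.
  nra.
have LHS : invmx (invmx (diagpart M) + A) = diag_mx (\row_k ((M k k)^-1 + A k k)^-1).
  rewrite /diagpart inv_diag; last by move=> k; rewrite mxE gt_eqF.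
  have -> : diag_mx (\row_k ((\row_i M i i) 0 k)^-1) + A
           = diag_mx (\row_k ((M k k)^-1 + A k k)).
    rewrite [in LHS]Ad; apply/matrixP => i j; rewrite !mxE.
    by case: (eqVneq i j) => [->|_]; rewrite ?mulr1n ?mulr0n ?addr0.
  rewrite inv_diag; last first.
    move=> k; rewrite mxE gt_eqF //; apply: ltr_wpDr => //.
    by rewrite invr_gt0.
  by apply/matrixP => i j; rewrite !mxE.
rewrite /loewner_ge LHS /diagpart -/Mi -/N -/P.
have -> : diag_mx (\row_k ((M k k)^-1 + A k k)^-1) - diag_mx (\row_i P i i)
          = diag_mx (\row_k (((M k k)^-1 + A k k)^-1 - P k k)).
  apply/matrixP => i j; rewrite !mxE.
  by case: (eqVneq i j) => [->|_]; rewrite ?mulr1n ?mulr0n ?subr0.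
split; first by rewrite tr_diag_mx.
move=> x; rewrite -/(bil _ _ _) bil_diag; apply: sumr_ge0 => k _.
rewrite mxE; apply: mulr_ge0; last exact: sqr_ge0.
by rewrite subr_ge0 key.
Qed.
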